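(* In the setting described in the context, if $(x_1,L_1),(x_2,L_2)\in\mathcal E_\varphi$ with $x_1\neq x_2$, then $L_1$ and $L_2$ are transverse.
   Context: $V$ real symplectic of dimension $2n$, $\mathcal L(V)$ its Lagrangian Grassmannian, $\Gamma<\mathrm{PU}(1,1)$ a torsion-free cocompact lattice acting on $\mathbb S^1=\partial\mathcal D_{1,1}$, $\rho:\Gamma\to\mathrm{Sp}(V)$ a homomorphism, and $\varphi:\mathbb S^1\to\mathcal L(V)$ a $\rho$-equivariant measurable map such that (i) $\beta_n(\varphi(x),\varphi(y),\varphi(z))=n\beta_1(x,y,z)$ for Lebesgue-a.e. $(x,y,z)$, and (ii) for every $L\in\mathcal L(V)$ the set of $x$ with $\varphi(x)\cap L\neq0$ has Lebesgue measure zero. Here $\beta_n(L_1,L_2,L_3)$ is the signature of $(x_1,x_2,x_3)\mapsto\langle x_1,x_2\rangle+\langle x_2,x_3\rangle+\langle x_3,x_1\rangle$ on $L_1\oplus L_2\oplus L_3$, and $\beta_1(x,y,z)=\pm1$ for pairwise distinct positively/negatively cyclically ordered triples in $\mathbb S^1$, $0$ otherwise. The essential graph $\mathcal E_\varphi\subset\mathbb S^1\times\mathcal L(V)$ is the support of the pushforward of Lebesgue measure under $x\mapsto(x,\varphi(x))$. *)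

(* Defs.v *)
From HB Require Import structures.
From mathcomp Require Import all_boot all_order all_algebra.
From mathcomp Require Import all_classical all_reals all_analysis.
From mathcomp Require Import complex.
Set Implicit Arguments. Unset Strict Implicit. Unset Printing Implicit Defensive.
Import Order.TTheory GRing.Theory Num.Theory.
Import numFieldNormedType.Exports.
Local Open Scope classical_set_scope.
Local Open Scope ring_scope.

Section Defs.
Variable R : realType.

Local Notation C := (complex R).

Definition conjc (z : C) : C := Complex (complex.Re z) (- complex.Im z).
Definition cnorm2 (z : C) : R := complex.Re z ^+ 2 + complex.Im z ^+ 2.

Definition circ (t : R) : C := Complex (cos t) (sin t).
Definition circ2 (t : R) : R * R := (cos t, sin t).
Definition coord (z : C) : R * R := (complex.Re z, complex.Im z).

(* Orientation cocycle beta_1 on S^1: +1 on positively (counterclockwise)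
   cyclically ordered pairwise distinct triples, -1 on negatively ordered
   ones, 0 otherwise.  For points of the circle this is the sign of the
   oriented area of the triangle (x,y,z). *)
Definition beta1 (x y z : C) : int :=
  sgz ((complex.Re y - complex.Re x) * (complex.Im z - complex.Im x)
     - (complex.Im y - complex.Im x) * (complex.Re z - complex.Re x)).

(* SU(1,1) = { [[a, b], [conj b, conj a]] : |a|^2 - |b|^2 = 1 },
   represented by the pair (a, b); PU(1,1) = SU(1,1) / {+-1}.          *)
Definition su11 (g : C * C) : Prop := cnorm2 g.1 - cnorm2 g.2 = 1.
Definition su_one : C * C := (1, 0).
Definition su_neg (g : C * C) : C * C := (- g.1, - g.2).
Definition su_mul (g h : C * C) : C * C :=
  (g.1 * h.1 + g.2 * conjc h.2, g.1 * h.2 + g.2 * conjc h.1).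
Definition su_inv (g : C * C) : C * C := (conjc g.1, - g.2).
Definition su_pow (g : C * C) (k : nat) : C * C := iter k (su_mul g) su_one.
Definition pu_eq (g h : C * C) : Prop := g = h \/ g = su_neg h.
Definition su_act (g : C * C) (z : C) : C :=
  (g.1 * z + g.2) / (conjc g.2 * z + conjc g.1).

(* G is the (full) preimage in SU(1,1) of a subgroup Gamma < PU(1,1) *)
Definition pu_subgroup (G : set (C * C)) : Prop :=
  [/\ G `<=` su11, G su_one,
      (forall g h, G g -> G h -> G (su_mul g h)),
      (forall g, G g -> G (su_inv g)) &
      (forall g, G g -> G (su_neg g))].

Definition pu_discrete (G : set (C * C)) : Prop :=
  exists2 e : R, 0 < e & forall g, G g ->
    cnorm2 (g.1 - 1) < e -> cnorm2 g.2 < e -> pu_eq g su_one.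

(* cocompact: there is a compact K = {k in SU(1,1) | |k_11|^2 <= M}
   of SU(1,1) with Gamma K = SU(1,1) *)
Definition pu_cocompact (G : set (C * C)) : Prop :=
  exists M : R, forall g, su11 g ->
    exists2 gam, G gam & cnorm2 (su_mul (su_inv gam) g).1 <= M.

Definition pu_torsion_free (G : set (C * C)) : Prop :=
  forall g, G g -> forall k : nat, (0 < k)%N ->
    pu_eq (su_pow g k) su_one -> pu_eq g su_one.

Definition tf_cocompact_lattice (G : set (C * C)) : Prop :=
  [/\ pu_subgroup G, pu_discrete G, pu_cocompact G & pu_torsion_free G].

Definition Jmx (n : nat) : 'M[R]_(n + n) := block_mx 0 1%:M (- 1%:M) 0.
Definition omega (n : nat) (x y : 'rV[R]_(n + n)) : R := (x *m Jmx n *m y^T) 0 0.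

(* Sp(V); g acts on row vectors by v |-> v *m g^T, on subspaces by L |-> L *m g^T *)
Definition symplectic (n : nat) (g : 'M[R]_(n + n)) : Prop :=
  g^T *m Jmx n *m g = Jmx n.

(* The Lagrangian Grassmannian L(V): a Lagrangian L is represented by the
   orthogonal projection onto it (so L(V) carries the usual topology of
   the Grassmannian, induced from the matrix space); the subspace L itself
   is the row space of the matrix. *)
Definition lagrangian (n : nat) (P : 'M[R]_(n + n)) : Prop :=
  [/\ P^T = P, P *m P = P, \rank P = n & P *m Jmx n *m P^T = 0].

Definition transverse (n : nat) (P Q : 'M[R]_(n + n)) : Prop :=
  \rank (P :&: Q)%MS = 0%N.

(* Maslov form on L1 (+) L2 (+) L3 (external direct sum inside V^3) *)
Definition maslov_form (n : nat) (x1 x2 x3 : 'rV[R]_(n + n)) : R :=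
  omega x1 x2 + omega x2 x3 + omega x3 x1.

Definition definite_subspace (n : nat) (s : R) (L1 L2 L3 : 'M[R]_(n + n))
    (k : nat) : Prop :=
  exists (a1 a2 a3 : 'I_k -> 'rV[R]_(n + n)),
    (forall i, (a1 i <= L1)%MS /\ (a2 i <= L2)%MS /\ (a3 i <= L3)%MS) /\
    forall c : 'I_k -> R, (exists i, c i != 0) ->
      0 < s * maslov_form (\sum_i c i *: a1 i) (\sum_i c i *: a2 i)
                          (\sum_i c i *: a3 i).

Definition inertia_index (n : nat) (s : R) (L1 L2 L3 : 'M[R]_(n + n)) : nat :=
  \max_(k < (3 * (n + n)).+1 | `[< definite_subspace s L1 L2 L3 k >]) k.

Definition beta_n (n : nat) (L1 L2 L3 : 'M[R]_(n + n)) : int :=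
  (inertia_index 1 L1 L2 L3)%:Z - (inertia_index (-1) L1 L2 L3)%:Z.

(* Measure theory on S^1: S^1 is parametrized by t |-> circ t; a set of
   S^1 is Lebesgue-null iff its preimage in R is. *)
Definition leb_measurable (A : set R) : Prop :=
  exists B : set R, measurable B /\
    (@lebesgue_measure R).-negligible ((A `\` B) `|` (B `\` A)).

Definition circ_measurable (n : nat) (phi : C -> 'M[R]_(n + n)) : Prop :=
  forall O : set 'M[R]_(n + n), open O ->
    leb_measurable [set t | O (phi (circ t))].

(* essential graph: support of the pushforward of Lebesgue measure on S^1
   under x |-> (x, phi x), S^1 x L(V) being topologized inside R^2 x M_2n *)
Definition ess_graph (n : nat) (phi : C -> 'M[R]_(n + n))
    (x : C) (L : 'M[R]_(n + n)) : Prop :=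
  forall N : set ((R * R) * 'M[R]_(n + n)), nbhs (coord x, L) N ->
    (0 < (@lebesgue_measure R) [set t | N (circ2 t, phi (circ t))])%E.

End Defs.

(* Main.v *)
Require Import Defs.
From HB Require Import structures.
From mathcomp Require Import all_boot all_order all_algebra.
From mathcomp Require Import all_classical all_reals all_analysis.
From mathcomp Require Import complex.
Import Order.TTheory GRing.Theory Num.Theory.
Import numFieldNormedType.Exports.
Local Open Scope classical_set_scope.
Local Open Scope ring_scope.
From mathcomp Require Import ring lra zify.
Set Implicit Arguments. Unset Strict Implicit. Unset Printing Implicit Defensive.
Section LA.
Variable R : realType.
Variable n : nat.
Local Notation V := 'rV[R]_(n + n).
Local Notation M := 'M[R]_(n + n).
Local Notation J := (@Jmx R n).

Lemma trJ : J^T = - J.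
Proof.
by rewrite /Jmx tr_block_mx !trmx0 trmx1 raddfN /= trmx1 opp_block_mx !oppr0 opprK.
Qed.

Lemma JJ : J *m J = - 1%:M.
Proof.
rewrite /Jmx mulmx_block !mulmx0 !mul0mx !mulmx1 !mul1mx !addr0 !add0r.
have e : forall k, - (1%:M : 'M[R]_k) = (-1)%:M by move=> k; rewrite raddfN.
by rewrite !e -scalar_mx_block.
Qed.

Lemma omegaE (x y : V) : omega x y = (x *m J *m y^T) 0 0.
Proof. by []. Qed.

Lemma omega_anti (x y : V) : omega x y = - omega y x.
Proof.
have e : (y *m J *m x^T)^T = - (x *m J *m y^T).
  by rewrite !trmx_mul trmxK trJ mulNmx mulmxN mulmxA.
rewrite !omegaE.
have -> : (y *m J *m x^T) 0 0 = ((y *m J *m x^T)^T) 0 0 by rewrite [RHS]mxE.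
by rewrite e [in RHS]mxE opprK.
Qed.

Lemma omegaxx (x : V) : omega x x = 0.
Proof.
have := omega_anti x x; move=> h.
have : 2 * omega x x = 0 by rewrite mulr2n mulrDl mul1r {1}h addNr.
by move/eqP; rewrite mulf_eq0 pnatr_eq0 /= => /eqP.
Qed.

Lemma omegaDl (x y z : V) : omega (x + y) z = omega x z + omega y z.
Proof. by rewrite !omegaE !mulmxDl mxE. Qed.
Lemma omegaDr (x y z : V) : omega x (y + z) = omega x y + omega x z.
Proof. by rewrite !omegaE linearD /= mulmxDr mxE. Qed.
Lemma omegaZl a (x z : V) : omega (a *: x) z = a * omega x z.
Proof. by rewrite !omegaE -!scalemxAl mxE. Qed.
Lemma omegaZr a (x z : V) : omega x (a *: z) = a * omega x z.
Proof. by rewrite !omegaE linearZ /= -scalemxAr mxE. Qed.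
Lemma omegaNl (x z : V) : omega (- x) z = - omega x z.
Proof. by rewrite -scaleN1r omegaZl mulN1r. Qed.
Lemma omegaNr (x z : V) : omega x (- z) = - omega x z.
Proof. by rewrite -scaleN1r omegaZr mulN1r. Qed.
Lemma omegaBl (x y z : V) : omega (x - y) z = omega x z - omega y z.
Proof. by rewrite omegaDl omegaNl. Qed.
Lemma omegaBr (x y z : V) : omega x (y - z) = omega x y - omega x z.
Proof. by rewrite omegaDr omegaNr. Qed.
Lemma omega0l (z : V) : omega 0 z = 0.
Proof. by rewrite -(scale0r 0) omegaZl mul0r. Qed.
Lemma omega0r (z : V) : omega z 0 = 0.
Proof. by rewrite -(scale0r 0) omegaZr mul0r. Qed.

Lemma lag_iso (P : M) (u v : V) : lagrangian P ->
  (u <= P)%MS -> (v <= P)%MS -> omega u v = 0.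
Proof.
case=> _ _ _ hJ /submxP[a ->] /submxP[b ->].
by rewrite omegaE trmx_mul !mulmxA -(mulmxA a) -(mulmxA _ _ P^T) hJ mulmx0 mul0mx mxE.
Qed.

Lemma lag_rank (P : M) : lagrangian P -> \rank P = n.
Proof. by case. Qed.

Lemma omega_nondeg (x : V) : (forall v : V, omega x v = 0) -> x = 0.
Proof.
move=> h.
have xJ : x *m J = 0.
  apply/rowP => j; have := h (delta_mx 0 j).
  rewrite omegaE trmx_delta -colE mxE => ->; by rewrite mxE.
have : x *m J *m J = - x by rewrite -mulmxA JJ mulmxN mulmx1.
by rewrite xJ mul0mx => /eqP; rewrite eq_sym oppr_eq0 => /eqP.
Qed.

End LA.
Section LA2.
Variable R : realType.
Variable n : nat.
Local Notation V := 'rV[R]_(n + n).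
Local Notation M := 'M[R]_(n + n).
Local Notation J := (@Jmx R n).

Lemma transverse_cap0 (P Q : M) : transverse P Q -> (P :&: Q = 0)%MS.
Proof. by move=> h; apply/eqP; rewrite -mxrank_eq0; apply/eqP. Qed.

Lemma transverse_vec (P Q : M) (v : V) : transverse P Q ->
  (v <= P)%MS -> (v <= Q)%MS -> v = 0.
Proof.
move=> /transverse_cap0 h vP vQ; apply/eqP; rewrite -submx0 -h sub_capmx.
by rewrite vP vQ.
Qed.

Lemma transverseC (P Q : M) : transverse P Q -> transverse Q P.
Proof. by rewrite /transverse capmxC. Qed.

Lemma transverse_full (P Q : M) (v : V) : \rank P = n -> \rank Q = n ->
  transverse P Q -> (v <= P + Q)%MS.
Proof.
move=> rP rQ tPQ; apply: submx_full; rewrite /row_full.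
have := mxrank_sum_cap P Q; rewrite rP rQ tPQ addn0 => ->.
by [].
Qed.

Lemma rowsq_ge0 (a : V) : 0 <= (a *m a^T) 0 0.
Proof.
rewrite mxE; apply: sumr_ge0 => j _; rewrite mxE; exact: sqr_ge0.
Qed.

Lemma rowsq_gt0 (a : V) : a != 0 -> 0 < (a *m a^T) 0 0.
Proof.
move=> a0; rewrite lt0r rowsq_ge0 andbT; apply: contra a0 => /eqP h.
apply/eqP/rowP => j; rewrite mxE.
have : \sum_i (a 0 i * a 0 i) = 0.
  transitivity ((a *m a^T) 0 0); last exact: h.
  by rewrite [RHS]mxE; apply: eq_bigr => i _; rewrite mxE.
move/eqP; rewrite psumr_eq0; last by move=> i _; rewrite -expr2 sqr_ge0.
move/allP => /(_ j (mem_index_enum j)) /=.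
by rewrite mulf_eq0 orbb => /eqP.
Qed.

End LA2.
Section LA3.
Variable R : realType.
Variable n : nat.
Local Notation V := 'rV[R]_(n + n).
Local Notation M := 'M[R]_(n + n).
Local Notation J := (@Jmx R n).

Definition qf (A C : M) (w : V) : R :=
  omega (w *m proj_mx A C) (w *m proj_mx C A).

Lemma maslov_expand (a' c' al ga w : V) t :
  w = al + ga -> omega a' al = 0 -> omega ga c' = 0 ->
  maslov_form (c' + t *: ga) (a' + t *: al) (t *: w)
  = omega c' a' + t ^+ 2 * omega al ga.
Proof.
move=> -> h1 h2; rewrite /maslov_form.
rewrite !(omegaDl, omegaDr, omegaZl, omegaZr) h1 h2 !omegaxx.
rewrite (omega_anti al c') (omega_anti ga a') (omega_anti ga al); ring.
Qed.

Lemma def_sub (A C L : M) (s : R) (w : V) :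
  s * s = 1 -> lagrangian A -> lagrangian C -> transverse A C ->
  (w <= L)%MS -> 0 < s * qf A C w ->
  definite_subspace s C A L (\rank A + 1).
Proof.
move=> ss lA lC tAC wL qpos.
have capAC := transverse_cap0 tAC.
have capCA : (C :&: A = 0)%MS by rewrite capmxC.
have rA := lag_rank lA; have rC := lag_rank lC.
have full (v : V) : (v <= A + C)%MS by apply: transverse_full v rA rC tAC.
have fullC (v : V) : (v <= C + A)%MS by rewrite addsmxC.
set B := row_base A.
set Pc := proj_mx C A.
set Cb := ((- s) *: (B *m J)) *m Pc.
set al := w *m proj_mx A C.
set ga := w *m Pc.
have walga : w = al + ga by rewrite /al /ga add_proj_mx.
have alA : (al <= A)%MS by exact: proj_mx_sub.
have gaC : (ga <= C)%MS by exact: proj_mx_sub.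
have BA : (B <= A)%MS by rewrite eq_row_base.
have CbC : (Cb <= C)%MS by exact: proj_mx_sub.
pose M1 := col_mx Cb ga.
pose M2 := col_mx B al.
pose M3 := col_mx (0 : 'M[R]_(mxrank A, n + n)) w.
exists (fun i => row i M1), (fun i => row i M2), (fun i => row i M3); split.
  move=> i; split; [|split]; apply: submx_trans (row_sub _ _) _;
    by rewrite col_mx_sub ?CbC ?gaC ?BA ?alA ?sub0mx.
move=> c [i ci].
set X := \row_i c i.
have sumE (Mx : 'M[R]_(mxrank A + 1, n + n)) :
    \sum_i c i *: row i Mx = X *m Mx.
  by rewrite mulmx_sum_row; apply: eq_bigr => j _; rewrite mxE.
rewrite !sumE -(hsubmxK X) !mul_row_col mulmx0 add0r.
set x := lsubmx X; set y := rsubmx X.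
have yE (v : V) : y *m v = y 0 0 *: v by rewrite {1}(mx11_scalar y) mul_scalar_mx.
rewrite !yE.
set a' := x *m B; set c' := x *m Cb; set t := y 0 0.
rewrite (@maslov_expand a' c' al ga w t walga); last first.
- by apply: (lag_iso lC gaC); exact: submx_trans (submxMl _ _) CbC.
- by apply: (lag_iso lA _ alA); exact: submx_trans (submxMl _ _) BA.
set W := x *m ((- s) *: (B *m J)).
have Wz : (W - c' <= A)%MS.
  by rewrite /c' /Cb mulmxA; exact: proj_mx_compl_sub.
have -> : omega c' a' = s * (a' *m a'^T) 0 0.
  have -> : c' = W - (W - c') by rewrite opprB addrC subrK.
  rewrite omegaBl (lag_iso lA Wz); last exact: submx_trans (submxMl _ _) BA.
  rewrite subr0 /W -scalemxAr omegaZl omegaE mulmxA -/a' -(mulmxA a' J J) JJ.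
  by rewrite mulmxN mulmx1 mulNmx mxE mulrN mulNr opprK.
rewrite mulrDr mulrA ss mul1r mulrCA.
have qdef : qf A C w = omega al ga by [].
rewrite -qdef.
have Xne : X != 0.
  apply/eqP => X0; move: ci; have : X 0 i = 0 by rewrite X0 mxE.
  by rewrite mxE => ->; rewrite eqxx.
have [x0|xn0] := eqVneq x 0.
- have tn0 : t != 0.
    apply: contra Xne => /eqP t0; apply/eqP; rewrite -(hsubmxK X) -/x -/y x0.
    rewrite (mx11_scalar y) -/t t0; apply/rowP => j; rewrite !mxE.
    by case: fintype.split => k; rewrite !mxE ?mul0rn.
  have -> : a' = 0 by rewrite /a' x0 mul0mx.
  rewrite mul0mx mxE add0r.
  by apply: mulr_gt0 => //; rewrite lt0r sqr_ge0 sqrf_eq0 tn0.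
- have a'n0 : a' != 0 by rewrite /a' mulmx_free_eq0 ?row_base_free.
  apply: ltr_pwDl; first exact: rowsq_gt0.
  by apply: mulr_ge0; [rewrite sqr_ge0|exact: ltW].
Qed.

End LA3.
Section LA4.
Variable R : realType.
Variable n : nat.
Local Notation V := 'rV[R]_(n + n).
Local Notation M := 'M[R]_(n + n).

Lemma rowv_neq0 k (x : 'rV[R]_k) : x != 0 -> exists i, x 0 i != 0.
Proof.
move=> xn0; apply/not_existsP => h; move/eqP: xn0; apply.
by apply/rowP => i; rewrite mxE; apply/eqP/negPn/negP; exact: h i.
Qed.

Definition famx k (a : 'I_k -> V) : 'M[R]_(k, n + n) := \matrix_(i, j) a i 0 j.

Lemma famxE k (a : 'I_k -> V) (c : 'I_k -> R) :
  \sum_i c i *: a i = (\row_i c i) *m famx a.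
Proof.
rewrite mulmx_sum_row; apply: eq_bigr => i _; rewrite mxE; congr (_ *: _).
by apply/rowP => j; rewrite !mxE.
Qed.

Lemma famx_sub k (a : 'I_k -> V) (P : M) :
  (forall i, (a i <= P)%MS) -> (famx a <= P)%MS.
Proof.
move=> h; apply/row_subP => i.
by have -> : row i (famx a) = a i by apply/rowP => j; rewrite !mxE.
Qed.


End LA4.
Section LA4b.
Variable R : realType.
Variable n : nat.
Local Notation V := 'rV[R]_(n + n).
Local Notation M := 'M[R]_(n + n).

Lemma maslov_opp (x y z : V) :
  maslov_form (- x) (- y) (- z) = maslov_form x y z.
Proof. by rewrite /maslov_form !(omegaNl, omegaNr) !opprK. Qed.

Definition trip k (a1 a2 a3 : 'I_k -> V) : 'M[R]_(k, n + n + (n + n) + (n + n)) :=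
  row_mx (row_mx (famx a1) (famx a2)) (famx a3).

Lemma count_def (L1 L2 L3 : M) k k' :
  definite_subspace 1 L1 L2 L3 k -> definite_subspace (-1) L1 L2 L3 k' ->
  (k + k' <= \rank L1 + \rank L2 + \rank L3)%N.
Proof.
move=> [a1 [a2 [a3 [ha pa]]]] [b1 [b2 [b3 [hb pb]]]].
set S := block_mx (block_mx L1 0 0 L2) 0 0 L3.
have rS : \rank S = (\rank L1 + \rank L2 + \rank L3)%N.
  by rewrite !rank_diag_block_mx.
have tripS k0 (c1 c2 c3 : 'I_k0 -> V) :
    (forall i, [/\ (c1 i <= L1)%MS, (c2 i <= L2)%MS & (c3 i <= L3)%MS]) ->
    (trip c1 c2 c3 <= S)%MS.
  move=> h; rewrite /trip.
  have /submxP[D1 ->] : (famx c1 <= L1)%MS by apply: famx_sub => i; case: (h i).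
  have /submxP[D2 ->] : (famx c2 <= L2)%MS by apply: famx_sub => i; case: (h i).
  have /submxP[D3 ->] : (famx c3 <= L3)%MS by apply: famx_sub => i; case: (h i).
  apply/submxP; exists (row_mx (row_mx D1 D2) D3).
  by rewrite /S !mul_row_block !mulmx0 !addr0 !add0r.
set T := trip a1 a2 a3; set N := trip b1 b2 b3.
have TS : (T <= S)%MS by apply: tripS => i; case: (ha i) => [? []].
have NS : (N <= S)%MS by apply: tripS => i; case: (hb i) => [? []].
rewrite -rS leqNgt; apply/negP => hlt.
have rTN : (\rank (col_mx T N) <= \rank S)%N by apply: mxrankS; rewrite col_mx_sub TS.
have Kn0 : kermx (col_mx T N) != 0.
  rewrite -mxrank_eq0 mxrank_ker subn_eq0 -ltnNge.
  exact: leq_ltn_trans rTN hlt.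
have [i Xn0] : exists i, row i (kermx (col_mx T N)) != 0.
  apply/not_existsP => h; move/eqP: Kn0; apply; apply/row_matrixP => i.
  by rewrite row0; apply/eqP/negPn/negP; exact: h i.
set X := row i _ in Xn0.
have X0 : X *m col_mx T N = 0 by rewrite /X -row_mul mulmx_ker row0.
move: X0 Xn0; rewrite -(hsubmxK X) mul_row_col.
set x := lsubmx X; set z := rsubmx X.
rewrite /T /N /trip !mul_mx_row !add_row_mx => e Xn0.
have e3 := congr1 rsubmx e; rewrite row_mxKr linear0 in e3.
have e12 := congr1 lsubmx e; rewrite row_mxKl linear0 in e12.
have e1 := congr1 lsubmx e12; rewrite row_mxKl linear0 in e1.
have e2 := congr1 rsubmx e12; rewrite row_mxKr linear0 in e2.
have ex1 : x *m famx a1 = - (z *m famx b1) by apply/eqP; rewrite -addr_eq0 e1.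
have ex2 : x *m famx a2 = - (z *m famx b2) by apply/eqP; rewrite -addr_eq0 e2.
have ex3 : x *m famx a3 = - (z *m famx b3) by apply/eqP; rewrite -addr_eq0 e3.
have rowx (w : 'rV[R]_k) : w = \row_j w 0 j by apply/rowP => j; rewrite mxE.
have rowz (w : 'rV[R]_k') : w = \row_j w 0 j by apply/rowP => j; rewrite mxE.
have Qx : x != 0 -> 0 < maslov_form (x *m famx a1) (x *m famx a2) (x *m famx a3).
  move=> /rowv_neq0 h; have := pa (fun j => x 0 j) h.
  by rewrite !famxE -!rowx mul1r.
have Qz : z != 0 -> 0 < - maslov_form (z *m famx b1) (z *m famx b2) (z *m famx b3).
  move=> /rowv_neq0 h; have := pb (fun j => z 0 j) h.
  by rewrite !famxE -!rowz mulN1r.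
have [x0|xn0] := eqVneq x 0; have [z0|zn0] := eqVneq z 0.
- by move: Xn0; rewrite x0 z0 row_mx0 eqxx.
- have := Qz zn0; rewrite -maslov_opp -ex1 -ex2 -ex3 x0 !mul0mx.
  by rewrite /maslov_form !omega0l !addr0 oppr0 ltxx.
- have := Qx xn0; rewrite ex1 ex2 ex3 z0 !mul0mx !oppr0.
  by rewrite /maslov_form !omega0l !addr0 ltxx.
- have := Qx xn0; rewrite ex1 ex2 ex3 maslov_opp => h1.
  have := Qz zn0; rewrite oppr_gt0 => h2.
  by have := lt_trans h1 h2; rewrite ltxx.
Qed.

End LA4b.
Section LA5.
Variable R : realType.
Variable n : nat.
Local Notation V := 'rV[R]_(n + n).
Local Notation M := 'M[R]_(n + n).

Lemma inertia_ge (s : R) (A B C : M) k :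
  (k <= 3 * (n + n))%N -> definite_subspace s A B C k ->
  (k <= inertia_index s A B C)%N.
Proof.
move=> hk hd; rewrite /inertia_index.
have hk' : (k < (3 * (n + n)).+1)%N by rewrite ltnS.
by apply: (@leq_bigmax_cond _ _ (fun i : 'I_(3 * (n + n)).+1 => nat_of_ord i) (Ordinal hk')) => /=; apply/asboolP.
Qed.

Lemma inertia_le (s : R) (A B C : M) m :
  (forall k, definite_subspace s A B C k -> (k <= m)%N) ->
  (inertia_index s A B C <= m)%N.
Proof.
move=> h; rewrite /inertia_index; apply/bigmax_leqP => i /asboolP; exact: h.
Qed.

Lemma beta_pos (A C L : M) (w : V) : (0 < n)%N ->
  lagrangian A -> lagrangian C -> lagrangian L -> transverse A C ->
  beta_n C A L = n%:Z -> (w <= L)%MS -> 0 <= qf A C w.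
Proof.
move=> n0 lA lC lL tAC hb wL; rewrite leNgt; apply/negP => qneg.
have hd := @def_sub _ _ A C L (-1) w ltac:(by rewrite mulN1r opprK) lA lC tAC wL.
rewrite mulN1r oppr_gt0 in hd; have {}hd := hd qneg.
rewrite (lag_rank lA) in hd.
have m1 : (n + 1 <= inertia_index (-1) C A L)%N.
  by apply: inertia_ge => //; rewrite mulnC; lia.
have p1 : (inertia_index 1 C A L <= 3 * n - (n + 1))%N.
  apply: inertia_le => k hk; have := count_def hk hd.
  rewrite (lag_rank lA) (lag_rank lC) (lag_rank lL); lia.
move: hb; rewrite /beta_n => /eqP; rewrite subr_eq -PoszD => /eqP [] e.
lia.
Qed.

Lemma beta_neg (A C L : M) (w : V) : (0 < n)%N ->
  lagrangian A -> lagrangian C -> lagrangian L -> transverse A C ->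
  beta_n C A L = - n%:Z -> (w <= L)%MS -> qf A C w <= 0.
Proof.
move=> n0 lA lC lL tAC hb wL; rewrite leNgt; apply/negP => qpos.
have hd := @def_sub _ _ A C L 1 w (mulr1 _ ) lA lC tAC wL.
rewrite mul1r in hd; have {}hd := hd qpos.
rewrite (lag_rank lA) in hd.
have m1 : (n + 1 <= inertia_index 1 C A L)%N.
  by apply: inertia_ge => //; rewrite mulnC; lia.
have p1 : (inertia_index (-1) C A L <= 3 * n - (n + 1))%N.
  apply: inertia_le => k hk; have := count_def hd hk.
  rewrite (lag_rank lA) (lag_rank lC) (lag_rank lL); lia.
move: hb; rewrite /beta_n => hb.
have : (inertia_index 1 C A L)%:Z + n%:Z - (inertia_index (-1) C A L)%:Z = 0.
  by rewrite addrAC hb addNr.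
by move/eqP; rewrite subr_eq0 -PoszD => /eqP [] e; lia.
Qed.

End LA5.
Lemma quad_zero (R : realType) (b Q : R) :
  0 <= Q -> (forall t, 0 <= 2 * t * b + t ^+ 2 * Q) -> b = 0.
Proof.
move=> Q0 h; set d := Q + 1.
have d0 : 0 < d by rewrite /d ltr_wpDl.
have := h (- b / d); set t := - b / d => ht.
have td : t * d = - b by rewrite /t mulrAC -mulrA divff ?mulr1 // gt_eqF.
have : 0 <= (2 * t * b + t ^+ 2 * Q) * (d * d).
  by apply: mulr_ge0 => //; apply: mulr_ge0; exact: ltW.
have -> : (2 * t * b + t ^+ 2 * Q) * (d * d) = 2 * (t * d) * b * d + (t * d) ^+ 2 * Q.
  by ring.
rewrite td /d.
have -> : 2 * - b * b * (Q + 1) + (- b) ^+ 2 * Q = - (b ^+ 2 * (Q + 2)) by ring.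
rewrite oppr_ge0 => hb; apply/eqP; rewrite -sqrf_eq0 eq_le sqr_ge0 andbT.
have Q2 : 0 < Q + 2 by rewrite ltr_wpDl.
by rewrite -(pmulr_lle0 _ Q2).
Qed.
Section LA7.
Variable R : realType.
Variable n : nat.
Local Notation V := 'rV[R]_(n + n).
Local Notation M := 'M[R]_(n + n).

Lemma pd_zero (A C L : M) (w : V) :
  lagrangian A -> lagrangian C -> lagrangian L ->
  transverse A C -> transverse L A -> transverse L C ->
  (forall u : V, (u <= L)%MS -> 0 <= qf A C u) ->
  (w <= L)%MS -> qf A C w = 0 -> w = 0.
Proof.
move=> lA lC lL tAC tLA tLC qge wL qw0.
have capAC := transverse_cap0 tAC.
have capCA : (C :&: A = 0)%MS by rewrite capmxC.
have rA := lag_rank lA; have rC := lag_rank lC; have rL := lag_rank lL.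
set Pa := proj_mx A C; set Pc := proj_mx C A.
have dec (v : V) : v *m Pa + v *m Pc = v.
  by apply: add_proj_mx => //; exact: transverse_full.
have PaA (v : V) : (v *m Pa <= A)%MS by exact: proj_mx_sub.
have PcC (v : V) : (v *m Pc <= C)%MS by exact: proj_mx_sub.
pose b (u v : V) := omega (u *m Pa) (v *m Pc).
have bsym u v : (u <= L)%MS -> (v <= L)%MS -> b u v = b v u.
  move=> uL vL; have := lag_iso lL uL vL.
  rewrite -{1}(dec u) -{1}(dec v) !(omegaDl, omegaDr).
  rewrite (lag_iso lA (PaA u) (PaA v)) (lag_iso lC (PcC u) (PcC v)) add0r addr0.
  rewrite /b (omega_anti (u *m Pc)) => /eqP; rewrite subr_eq0 => /eqP.
  by [].
have b0 u : (u <= L)%MS -> b w u = 0.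
  move=> uL; apply: (@quad_zero _ _ (qf A C u)); first exact: qge.
  move=> t; have := qge (w + t *: u).
  rewrite addmx_sub ?wL ?scalemx_sub // => /(_ isT).
  rewrite /qf !mulmxDl -!scalemxAl !(omegaDl, omegaDr, omegaZl, omegaZr).
  rewrite -/Pa -/Pc.
  have -> : omega (u *m Pa) (w *m Pc) = b u w by [].
  rewrite -(bsym _ _ wL uL) /b.
  have -> : omega (w *m Pa) (w *m Pc) = 0 by exact: qw0.
  by rewrite add0r; congr (0 <= _); rewrite /qf; ring.
have wa0 : w *m Pa = 0.
  apply: omega_nondeg => v; rewrite -(dec v) omegaDr.
  rewrite (lag_iso lA (PaA w) (PaA v)) add0r.
  have /sub_addsmxP[[u1 u2] /= ce] : (v *m Pc <= L + A)%MS.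
    exact: transverse_full.
  set u := u1 *m L in ce.
  have uL : (u <= L)%MS by exact: submxMl.
  have <- : u *m Pc = v *m Pc.
    have -> : u = v *m Pc - u2 *m A by rewrite ce addrK.
    by rewrite mulmxBl (proj_mx_id capCA (PcC v)) (proj_mx_0 capCA (submxMl u2 A)) subr0.
  exact: b0.
have wC : (w <= C)%MS by rewrite -(dec w) wa0 add0r.
exact: transverse_vec tLC wL wC.
Qed.

Lemma trans_of_signs (A C L1 L2 : M) :
  lagrangian A -> lagrangian C -> lagrangian L1 ->
  transverse A C -> transverse L1 A -> transverse L1 C ->
  (forall u : V, (u <= L1)%MS -> 0 <= qf A C u) ->
  (forall u : V, (u <= L2)%MS -> qf A C u <= 0) ->
  transverse L1 L2.
Proof.
move=> lA lC lL1 tAC tLA tLC q1 q2.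
rewrite /transverse; apply/eqP; rewrite mxrank_eq0; apply/eqP/row_matrixP => i.
rewrite row0; set r := row i _.
have r1 : (r <= L1)%MS by apply: submx_trans (row_sub _ _) (capmxSl _ _).
have r2 : (r <= L2)%MS by apply: submx_trans (row_sub _ _) (capmxSr _ _).
apply: (pd_zero lA lC lL1 tAC tLA tLC q1 r1).
by apply/eqP; rewrite eq_le q2 // q1.
Qed.
End LA7.
Lemma trace_idem (R : realType) m (P : 'M[R]_m) : P *m P = P -> \tr P = (\rank P)%:R.
Proof.
move=> PP.
have e := mulmx_base P.
have /row_freeP[B' hB] := row_base_free P.
have /row_fullP[C' hC] := col_base_full P.
set cb := col_base P in e hC *; set rb := row_base P in e hB *.
clearbody cb rb.
have BC : rb *m cb = 1%:M.
  have : C' *m (cb *m rb *m (cb *m rb)) *m B' = C' *m (cb *m rb) *m B'.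
    by rewrite e PP.
  by rewrite !mulmxA hC mul1mx -!mulmxA hB mulmx1.
by rewrite -[in LHS]e mxtrace_mulC BC mxtrace1.
Qed.
Section F1.
Context d1 d2 (T1 : measurableType d1) (T2 : measurableType d2) (R : realType).
Variable m1 : {measure set T1 -> \bar R}.
Variable m2 : {sigma_finite_measure set T2 -> \bar R}.

Lemma prod_null_section (M : set (T1 * T2)) : measurable M ->
  (m1 \x m2)%E M = 0%E -> m1.-negligible [set x | m2 (xsection M x) != 0%E].
Proof.
move=> mM hM.
have mf := @measurable_fun_xsection _ _ T1 T2 R m2 M mM.
have : (\int[m1]_(x in setT) `|(m2 \o xsection M) x| = 0)%E.
  rewrite -[RHS]hM /product_measure1; apply: eq_integral => x _ /=.
  by rewrite gee0_abs.
move/(ae_eq_integral_abs m1 measurableT mf) => [N [mN N0 sN]].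
exists N; split => // x /= hx; apply: sN => /= h; move/eqP: hx; apply.
exact: h.
Qed.

End F1.
Section G1.
Variable R : realType.

Lemma open_avoid (O N : set R) (th : R) : open O -> O th ->
  (@lebesgue_measure R).-negligible N -> exists a, O a /\ ~ N a.
Proof.
move=> oO Oth [B [mB B0 NB]].
have : nbhs th O by exact: open_nbhs_nbhs.
move=> /nbhs_ballP [e /= e0 hb]; rewrite ball_itv in hb.
apply: contrapT => hn.
have sub : `]th - e, th + e[%classic `<=` B.
  move=> x /hb Ox; apply: NB; apply: contrapT => nx; apply: hn; by exists x.
set I := `]th - e, th + e[%classic in sub.
have mI : measurable I by exact: measurable_itv.
have := @subset_measure0 _ (measurableTypeR R) R (@lebesgue_measure R) I B mI mB sub B0.
move=> h; have := etrans (esym (@lebesgue_measure_itv R `]th - e, th + e[)) h.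
have lt : th - e < th + e by rewrite ltrBlDr -addrA ltrDl addr_gt0.
rewrite /= lte_fin lt -EFinD => /eqP; rewrite eqe => /eqP.
have -> : th + e + - (th - e) = e + e by ring.
by move=> /eqP; rewrite gt_eqF // addr_gt0.
Qed.
End G1.
Lemma leb_mono (R : realType) (A B : set R) : A `<=` B ->
  (@lebesgue_measure R A <= @lebesgue_measure R B)%E.
Proof.
move=> AB; rewrite /lebesgue_measure /lebesgue_stieltjes_measure /measure_extension.
exact: le_mu_ext.
Qed.

Lemma ess_closed (R : realType) n (phi : complex R -> 'M[R]_(n + n)) x L
  (O : set (R * R)) (Nn : set R) (g : 'M[R]_(n + n) -> R) :
  ess_graph phi x L -> open O -> O (Defs.coord x) ->
  (@lebesgue_measure R).-negligible Nn -> continuous g ->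
  (forall t, O (circ2 t) -> ~ Nn t -> 0 <= g (phi (circ t))) -> 0 <= g L.
Proof.
move=> ess oO Ox [B [mB B0 NB]] cg hg.
rewrite leNgt; apply/negP => gL.
set U := [set P | g P < 0].
have oU : open U.
  have -> : U = g @^-1` [set y | y < 0] by [].
  by apply: open_comp; [move=> P _; exact: cg | exact: open_lt].
have hN : nbhs (Defs.coord x, L) (O `*` U).
  exists (O, U) => //=; split; apply: open_nbhs_nbhs; split => //.
have := ess _ hN.
have sub : [set t | (O `*` U) (circ2 t, phi (circ t))] `<=` B.
  move=> t /= [Ot Ut]; apply: NB; apply: contrapT => nt.
  by have := hg t Ot nt; rewrite leNgt Ut.
have := leb_mono sub; rewrite B0 => h1 h2.
by have := lt_le_trans h2 h1; rewrite ltxx.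
Qed.
Section MXC.
Variable R : realType.
Variable T : topologicalType.

Definition mxc p q (F : T -> 'M[R]_(p, q)) := forall i j, continuous (fun x => F x i j).

Lemma cont_sum (I : Type) (s : seq I) (f : I -> T -> R) :
  (forall k, continuous (f k)) -> continuous (fun x => \sum_(k <- s) f k x).
Proof.
move=> hf; elim: s => [|a s ih].
  have -> : (fun x => \sum_(k <- [::]) f k x) = cst 0.
    by apply: funext => x; rewrite big_nil.
  exact: cst_continuous.
have -> : (fun x => \sum_(k <- a :: s) f k x) = f a + (fun x => \sum_(k <- s) f k x).
  by apply: funext => x; rewrite big_cons.
by move=> x; apply: continuousD; [exact: hf|exact: ih].
Qed.

Lemma mxc_cst p q (A : 'M[R]_(p, q)) : mxc (fun _ => A).
Proof. by move=> i j; exact: cst_continuous. Qed.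

Lemma mxc_add p q (F G : T -> 'M[R]_(p, q)) : mxc F -> mxc G -> mxc (fun x => F x + G x).
Proof.
move=> hF hG i j.
have -> : (fun x => (F x + G x) i j) = (fun x => F x i j) + (fun x => G x i j).
  by apply: funext => x; rewrite mxE.
by move=> x; apply: continuousD; [exact: hF|exact: hG].
Qed.

Lemma mxc_opp p q (F : T -> 'M[R]_(p, q)) : mxc F -> mxc (fun x => - F x).
Proof.
move=> hF i j.
have -> : (fun x => (- F x) i j) = - (fun x => F x i j).
  by apply: funext => x; rewrite mxE.
by move=> x; apply: continuousN; exact: hF.
Qed.

Lemma mxc_mul p q r (F : T -> 'M[R]_(p, q)) (G : T -> 'M[R]_(q, r)) :
  mxc F -> mxc G -> mxc (fun x => F x *m G x).
Proof.
move=> hF hG i j.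
have -> : (fun x => (F x *m G x) i j) = (fun x => \sum_k (F x i k * G x k j)).
  by apply: funext => x; rewrite mxE.
apply: cont_sum => k x; apply: continuousM; [exact: hF|exact: hG].
Qed.

Lemma mxc_tr p q (F : T -> 'M[R]_(p, q)) : mxc F -> mxc (fun x => (F x)^T).
Proof.
move=> hF i j.
have -> : (fun x => (F x)^T i j) = (fun x => F x j i) by apply: funext => x; rewrite mxE.
exact: hF.
Qed.

End MXC.

Lemma mxc_id (R : realType) p q : mxc (fun P : 'M[R]_(p, q) => P).
Proof. by move=> i j; exact: coord_continuous. Qed.
Section Ang.
Variable R : realType.

Lemma unit_angle (c s : R) : c ^+ 2 + s ^+ 2 = 1 -> exists th, cos th = c /\ sin th = s.
Proof.
move=> h.
have c1 : -1 <= c <= 1.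
  have : c ^+ 2 <= 1 by rewrite -h lerDl sqr_ge0.
  move=> hc; apply/andP; split; nra.
have sE : Num.sqrt (1 - c ^+ 2) = `|s|.
  by rewrite -h addrC addKr sqrtr_sqr.
have [s0|s0] := leP 0 s.
- exists (acos c); rewrite acosK ?inE // sin_acos // sE ger0_norm //.
- exists (- acos c); rewrite cosN sinN acosK ?inE // sin_acos // sE ltr0_norm //.
  by rewrite opprK.
Qed.

Definition Dfun (a b : R) (p : R * R) : R :=
  (cos b - cos a) * (p.2 - sin a) - (sin b - sin a) * (p.1 - cos a).

Lemma beta1_Dfun a b t : beta1 (circ a) (circ b) (circ t) = sgz (Dfun a b (circ2 t)).
Proof. by []. Qed.

Lemma contB (T : topologicalType) (f g : T -> R) :
  continuous f -> continuous g -> continuous (fun x => f x - g x).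
Proof. by move=> hf hg x; exact: (continuousB (hf x) (hg x)). Qed.
Lemma contD (T : topologicalType) (f g : T -> R) :
  continuous f -> continuous g -> continuous (fun x => f x + g x).
Proof. by move=> hf hg x; exact: (continuousD (hf x) (hg x)). Qed.
Lemma contM (T : topologicalType) (f g : T -> R) :
  continuous f -> continuous g -> continuous (fun x => f x * g x).
Proof. by move=> hf hg x; exact: (continuousM (hf x) (hg x)). Qed.
Lemma contC (T : topologicalType) (c : R) : continuous (fun _ : T => c).
Proof. by move=> x; exact: cst_continuous. Qed.

Lemma cont_fst : continuous (fun p : R * R => p.1).
Proof. by move=> x; exact: cvg_fst. Qed.
Lemma cont_snd : continuous (fun p : R * R => p.2).
Proof. by move=> x; exact: cvg_snd. Qed.

Lemma Dfun_cont_p a b : continuous (Dfun a b).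
Proof.
rewrite /Dfun; apply: contB; apply: contM; try exact: contC.
- by apply: contB; [exact: cont_snd|exact: contC].
- by apply: contB; [exact: cont_fst|exact: contC].
Qed.

Lemma Dfun_cont_a b p : continuous (fun a => Dfun a b p).
Proof.
rewrite /Dfun; apply: contB; apply: contM.
- by apply: contB; [exact: contC|exact: continuous_cos].
- by apply: contB; [exact: contC|exact: continuous_sin].
- by apply: contB; [exact: contC|exact: continuous_sin].
- by apply: contB; [exact: contC|exact: continuous_cos].
Qed.

Lemma Dfun_cont_b a p : continuous (fun b => Dfun a b p).
Proof.
rewrite /Dfun; apply: contB; apply: contM; try exact: contC.
- by apply: contB; [exact: continuous_cos|exact: contC].
- by apply: contB; [exact: continuous_sin|exact: contC].
Qed.

Lemma open_pos (T : topologicalType) (f : T -> R) : continuous f -> open [set x | 0 < f x].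
Proof.
move=> cf; have -> : [set x | 0 < f x] = f @^-1` [set y | 0 < y] by [].
by apply: open_comp; [move=> x _; exact: cf|exact: open_gt].
Qed.

Lemma open_neg (T : topologicalType) (f : T -> R) : continuous f -> open [set x | f x < 0].
Proof.
move=> cf; have -> : [set x | f x < 0] = f @^-1` [set y | y < 0] by [].
by apply: open_comp; [move=> x _; exact: cf|exact: open_lt].
Qed.

End Ang.
Lemma sep_angles (R : realType) (x1 x2 : complex R) : cnorm2 x1 = 1 -> cnorm2 x2 = 1 -> x1 <> x2 ->
  exists a b, 0 < Dfun a b (Defs.coord x1) /\ Dfun a b (Defs.coord x2) < 0.
Proof.
case: x1 => p1 q1; case: x2 => p2 q2; rewrite /cnorm2 /= => h1 h2 hne.
set d1 := p2 - p1; set d2 := q2 - q1.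
have dpos : 0 < d1 ^+ 2 + d2 ^+ 2.
  rewrite lt0r addr_ge0 ?sqr_ge0 // andbT paddr_eq0 ?sqr_ge0 // !sqrf_eq0.
  apply/negP => /andP[/eqP e1 /eqP e2]; apply: hne.
  by rewrite /d1 /d2 in e1 e2; congr Complex; apply/eqP; rewrite eq_sym -subr_eq0; apply/eqP.
set r := Num.sqrt (d1 ^+ 2 + d2 ^+ 2).
have r0 : 0 < r by rewrite sqrtr_gt0.
have rr : r ^+ 2 = d1 ^+ 2 + d2 ^+ 2 by rewrite sqr_sqrtr // ltW.
set e1 := - d2 / r; set e2 := d1 / r.
have hu : e1 ^+ 2 + e2 ^+ 2 = 1.
  rewrite /e1 /e2 !expr_div_n sqrrN -mulrDl addrC -rr divff //.
  by rewrite expf_neq0 // gt_eqF.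
have [th [cth sth]] := unit_angle hu.
exists (th + pi), th.
have Dform p : Dfun (th + pi) th p = 2 * (e1 * p.2 - e2 * p.1).
  by rewrite /Dfun cosD sinD cospi sinpi cth sth; ring.
have eform p : e1 * p.2 - e2 * p.1 = - (d1 * p.1 + d2 * p.2) / r.
  by rewrite /e1 /e2; field; rewrite gt_eqF.
have dot : 0 < 1 - (p1 * p2 + q1 * q2).
  have : d1 ^+ 2 + d2 ^+ 2 = 2 * (1 - (p1 * p2 + q1 * q2)).
    rewrite /d1 /d2; transitivity ((p1 ^+ 2 + q1 ^+ 2) + (p2 ^+ 2 + q2 ^+ 2) - 2 * (p1 * p2 + q1 * q2)).
      by ring.
    by rewrite h1 h2; ring.
  by move=> e; move: dpos; rewrite e pmulr_rgt0.
rewrite !Dform !eform /Defs.coord /=; split.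
- apply: mulr_gt0 => //; apply: divr_gt0 => //.
  have -> : - (d1 * p1 + d2 * q1) = 1 - (p1 * p2 + q1 * q2).
    by rewrite /d1 /d2 -h1; ring.
  exact: dot.
- rewrite pmulr_rlt0 // pmulr_llt0 ?invr_gt0 // oppr_lt0.
  have -> : d1 * p2 + d2 * q2 = 1 - (p1 * p2 + q1 * q2).
    by rewrite /d1 /d2 -h2; ring.
  exact: dot.
Qed.
Section EssL.
Variable R : realType.
Variable n : nat.
Local Notation M := 'M[R]_(n + n).

Lemma ess_circle (phi : complex R -> M) x L : ess_graph phi x L -> cnorm2 x = 1.
Proof.
move=> ess; apply: contrapT => hne.
pose h (p : R * R) := p.1 * p.1 + p.2 * p.2.
have ch : continuous h.
  by apply: contD; apply: contM; (exact: cont_fst || exact: cont_snd).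
have hc t : h (circ2 t) = 1 by rewrite /h /circ2 /= -!expr2 cos2Dsin2.
have hx : h (Defs.coord x) = cnorm2 x by rewrite /h /cnorm2 /Defs.coord /= !expr2.
have N0 := negligible_set0 (@lebesgue_measure R).
have [lt|gt] : cnorm2 x < 1 \/ 1 < cnorm2 x.
  by case: (ltgtP (cnorm2 x) 1) => [l|g|e]; [left|right|].  
- have oO : open [set p | 0 < 1 - h p].
    by apply: open_pos; apply: contB; [exact: contC|exact: ch].
  have Ox : [set p | 0 < 1 - h p] (Defs.coord x) by rewrite /= hx subr_gt0.
  suff : (0 : R) <= -1 by rewrite ler0N1.
  apply: (@ess_closed R n phi x L _ set0 (fun _ => -1) ess oO Ox N0 (@contC R _ (-1))).
  by move=> t /=; rewrite hc subrr ltxx.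
- have oO : open [set p | 0 < h p - 1].
    by apply: open_pos; apply: contB; [exact: ch|exact: contC].
  have Ox : [set p | 0 < h p - 1] (Defs.coord x) by rewrite /= hx subr_gt0.
  suff : (0 : R) <= -1 by rewrite ler0N1.
  apply: (@ess_closed R n phi x L _ set0 (fun _ => -1) ess oO Ox N0 (@contC R _ (-1))).
  by move=> t /=; rewrite hc subrr ltxx.
Qed.

Lemma ess_eq0 (phi : complex R -> M) x L (g : M -> R) : ess_graph phi x L ->
  continuous g -> (forall t, g (phi (circ t)) = 0) -> g L = 0.
Proof.
move=> ess cg hg; have N0 := negligible_set0 (@lebesgue_measure R).
apply/eqP; rewrite eq_le; apply/andP; split.
- have := @ess_closed R n phi x L setT set0 (fun P => - g P) ess openT I N0.
  rewrite oppr_ge0; apply => //; first by move=> y; apply: continuousN; exact: cg.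
  by move=> t _ _; rewrite hg oppr0.
- apply: (@ess_closed R n phi x L setT set0 g ess openT I N0 cg).
  by move=> t _ _; rewrite hg.
Qed.

Lemma mx_ess_eq0 p q (phi : complex R -> M) x L (F : M -> 'M[R]_(p, q)) :
  ess_graph phi x L -> mxc F -> (forall t, F (phi (circ t)) = 0) -> F L = 0.
Proof.
move=> ess cF hF; apply/matrixP => i j; rewrite mxE.
apply: (@ess_eq0 phi x L (fun P => F P i j) ess (cF i j)).
by move=> t; rewrite hF mxE.
Qed.

Lemma ess_lagrangian (phi : complex R -> M) x L :
  (forall t, lagrangian (phi (circ t))) -> ess_graph phi x L -> lagrangian L.
Proof.
move=> hl ess.
have sym : L^T = L.
  apply/eqP; rewrite -subr_eq0; apply/eqP.
  apply: (@mx_ess_eq0 _ _ phi x L (fun P => P^T - P) ess).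
    by apply: mxc_add; [apply: mxc_tr; exact: mxc_id|apply: mxc_opp; exact: mxc_id].
  by move=> t; case: (hl t) => -> _ _ _; rewrite subrr.
have idem : L *m L = L.
  apply/eqP; rewrite -subr_eq0; apply/eqP.
  apply: (@mx_ess_eq0 _ _ phi x L (fun P => P *m P - P) ess).
    by apply: mxc_add; [apply: mxc_mul; exact: mxc_id|apply: mxc_opp; exact: mxc_id].
  by move=> t; case: (hl t) => _ -> _ _; rewrite subrr.
have iso : L *m @Jmx R n *m L^T = 0.
  apply: (@mx_ess_eq0 _ _ phi x L (fun P => P *m @Jmx R n *m P^T) ess).
    by apply: mxc_mul; [apply: mxc_mul; [exact: mxc_id|exact: mxc_cst]|apply: mxc_tr; exact: mxc_id].
  by move=> t; case: (hl t) => _ _ _ ->.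
have tr : \tr L - n%:R = 0.
  apply: (@ess_eq0 phi x L (fun P => \tr P - n%:R) ess).
    apply: contB; last exact: contC.
    by apply: cont_sum => i; exact: coord_continuous.
  move=> t; case: (hl t) => _ i2 rk _.
  by rewrite trace_idem // rk subrr.
split => //.
move/eqP: tr; rewrite subr_eq0 trace_idem // eqr_nat => /eqP //.
Qed.
End EssL.
Lemma qf_cont (R : realType) n (A C : 'M[R]_(n + n)) (v : 'rV[R]_(n + n)) :
  continuous (fun P : 'M[R]_(n + n) => qf A C (v *m P)).
Proof.
have h : mxc (fun P : 'M[R]_(n + n) =>
   v *m P *m proj_mx A C *m @Jmx R n *m (v *m P *m proj_mx C A)^T).
  apply: mxc_mul; last apply: mxc_tr.
  - apply: mxc_mul; [apply: mxc_mul|exact: mxc_cst]; [apply: mxc_mul|exact: mxc_cst];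
      [exact: mxc_cst|exact: mxc_id].
  - apply: mxc_mul; [apply: mxc_mul|exact: mxc_cst]; [exact: mxc_cst|exact: mxc_id].
exact: h 0 0.
Qed.
Unset Implicit Arguments.
Theorem lemma8p4 (R : realType) (n : nat) (G : set (complex R * complex R))
  (rho : complex R * complex R -> 'M[R]_(n + n))
  (phi : complex R -> 'M[R]_(n + n)) :
  tf_cocompact_lattice G ->
  (forall g, G g -> symplectic (rho g)) ->
  (forall g h, G g -> G h -> rho (su_mul g h) = rho g *m rho h) ->
  (forall g, G g -> rho (su_neg g) = rho g) ->
  (forall t, lagrangian (phi (circ t))) ->
  circ_measurable phi ->
  (forall g t, G g ->
     (phi (su_act g (circ t)) == phi (circ t) *m (rho g)^T)%MS) ->
  {ae ((@lebesgue_measure R \x @lebesgue_measure R) \x @lebesgue_measure R)%E,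
     forall t : R * R * R,
     beta_n (phi (circ t.1.1)) (phi (circ t.1.2)) (phi (circ t.2))
       = n%:Z * beta1 (circ t.1.1) (circ t.1.2) (circ t.2)} ->
  (forall L, lagrangian L ->
     {ae @lebesgue_measure R, forall t, transverse (phi (circ t)) L}) ->
  forall x1 L1 x2 L2,
    ess_graph phi x1 L1 -> ess_graph phi x2 L2 -> x1 <> x2 ->
    transverse L1 L2.
Proof.
move=> _ _ _ _ hl _ _ hbeta htr x1 L1 x2 L2 e1 e2 hx.
have [n0|npos] := posnP n.
  rewrite /transverse; have := rank_leq_col (L1 :&: L2)%MS; lia.
have c1 := ess_circle e1; have c2 := ess_circle e2.
have lL1 := ess_lagrangian hl e1; have lL2 := ess_lagrangian hl e2.
have [tha [thb [s1 s2]]] := sep_angles c1 c2 hx.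
move: hbeta => [M [mM M0 sM]].
have [B [mB B0 GB]] := prod_null_section mM M0.
have Ha := prod_null_section mB B0.
have [tL1 tL2] := (htr _ lL1, htr _ lL2).
set Oa := [set a | 0 < Dfun a thb (Defs.coord x1)] `&` [set a | Dfun a thb (Defs.coord x2) < 0].
have oOa : open Oa.
  by apply: openI; [apply: open_pos|apply: open_neg]; exact: Dfun_cont_a.
have [a [[Oa1 Oa2] na]] := open_avoid oOa (conj s1 s2) (negligibleU (negligibleU Ha tL1) tL2).
have ta1 : transverse (phi (circ a)) L1 by apply: contrapT => h; apply: na; left; right.
have ta2 : transverse (phi (circ a)) L2 by apply: contrapT => h; apply: na; right.
have Ba0 : (@lebesgue_measure R (xsection B a) = 0)%E.
  by apply/eqP/negPn/negP => h; apply: na; left; left.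
have Nb0 : (@lebesgue_measure R).-negligible (xsection B a).
  by exists (xsection B a); split => //; exact: measurable_xsection.
have lC := hl a.
set Ob := [set b | 0 < Dfun a b (Defs.coord x1)] `&` [set b | Dfun a b (Defs.coord x2) < 0].
have oOb : open Ob.
  by apply: openI; [apply: open_pos|apply: open_neg]; exact: Dfun_cont_b.
have [b [[Ob1 Ob2] nb]] := open_avoid oOb (conj Oa1 Oa2)
  (negligibleU (negligibleU (negligibleU Nb0 tL1) tL2) (htr _ lC)).
have tb1 : transverse (phi (circ b)) L1 by apply: contrapT => h; apply: nb; left; left; right.
have tb2 : transverse (phi (circ b)) L2 by apply: contrapT => h; apply: nb; left; right.
have tAC : transverse (phi (circ b)) (phi (circ a)) by apply: contrapT => h; apply: nb; right.
have Mab0 : (@lebesgue_measure R (xsection M (a, b)) = 0)%E.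
  apply/eqP/negPn/negP => h; apply: nb; left; left; left.
  by rewrite /xsection /=; apply/mem_set; exact: GB.
have Nn : (@lebesgue_measure R).-negligible (xsection M (a, b)).
  by exists (xsection M (a, b)); split => //; exact: (measurable_xsection (a, b) mM).
have hP t : ~ xsection M (a, b) t ->
    beta_n (phi (circ a)) (phi (circ b)) (phi (circ t)) =
    n%:Z * beta1 (circ a) (circ b) (circ t).
  move=> nt; apply: contrapT => hne; apply: nt.
  by rewrite /xsection /=; apply/mem_set; apply: sM.
have lA := hl b.
set A := phi (circ b) in tAC tb1 tb2 lA hP *.
set C := phi (circ a) in tAC ta1 ta2 lC hP *.
have q1 (u : 'rV[R]_(n + n)) : (u <= L1)%MS -> 0 <= qf A C u.
  move=> /submxP [v ->].
  have := (@ess_closed R n phi x1 L1 [set p | 0 < Dfun a b p] _ (fun P => qf A C (v *m P))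
    e1 (open_pos (@Dfun_cont_p R a b)) Ob1 Nn (@qf_cont R n A C v)); apply.
  move=> t Ot nt; have hb := hP t nt.
  rewrite beta1_Dfun (gtr0_sgz Ot) mulr1 in hb.
  apply: (beta_pos npos lA lC (hl t) tAC hb); exact: submxMl.
have q2 (u : 'rV[R]_(n + n)) : (u <= L2)%MS -> qf A C u <= 0.
  move=> /submxP [v ->]; rewrite -oppr_ge0.
  apply: (@ess_closed R n phi x2 L2 [set p | Dfun a b p < 0] _ (fun P => - qf A C (v *m P))
    e2 (open_neg (@Dfun_cont_p R a b)) Ob2 Nn (fun P => continuousN (@qf_cont R n A C v P))).
  move=> t Ot nt; have hb := hP t nt.
  rewrite beta1_Dfun (ltr0_sgz Ot) mulrN1 in hb.
  rewrite oppr_ge0; apply: (beta_neg npos lA lC (hl t) tAC hb); exact: submxMl.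
exact: trans_of_signs lA lC lL1 tAC (transverseC tb1) (transverseC ta1) q1 q2.
Qed.
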